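(* For every $\gamma>0$ there exists a density operator $\varrho$ on ${\cal H}$ with $0<\operatorname{tr}[\varrho H]<\infty$ such that $$\left\|\widetilde\varrho_{-}-\frac{{\cal N}_{-}(\gamma)[\varrho]}{\operatorname{tr}\big[{\cal N}_{-}(\gamma)[\varrho]\big]}\right\|_1\ \ge\ \tfrac12\ln(e-1),$$ and (for every $\gamma>0$) there likewise exists a density operator $\varrho$ with $\operatorname{tr}[\varrho H]<\infty$ such that $$\left\|\widetilde\varrho_{+}-\frac{{\cal N}_{+}(\gamma)[\varrho]}{\operatorname{tr}\big[{\cal N}_{+}(\gamma)[\varrho]\big]}\right\|_1\ \ge\ \tfrac12\ln(e-1).$$
   Context: ${\cal H}$ is a separable Hilbert space with orthonormal (Fock) basis $\{|n\rangle\}_{n=0}^{\infty}$; $a=\sum_{n\ge1}\sqrt{n}\,|n-1\rangle\langle n|$, $a^{\dagger}=\sum_{n\ge0}\sqrt{n+1}\,|n+1\rangle\langle n|$, $H=a^{\dagger}a$. For a density operator $\varrho$, $\operatorname{tr}[\varrho H^k]=\sum_n n^k\langle n|\varrho|n\rangle$. Ideal photon subtraction/addition outputs (defined when $\operatorname{tr}[\varrho H]<\infty$, and for subtraction also $\operatorname{tr}[\varrho H]>0$): $\widetilde\varrho_{-}=a\varrho a^{\dagger}/\operatorname{tr}[a\varrho a^{\dagger}]$, $\widetilde\varrho_{+}=a^{\dagger}\varrho a/\operatorname{tr}[a^{\dagger}\varrho a]$. For $\gamma>0$, the approximate photon subtraction and addition operations are ${\cal N}_{-}(\gamma)[\varrho]=(e^{2\gamma}-1)\,a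 e^{-\gamma H}\varrho e^{-\gamma H}a^{\dagger}$ and ${\cal N}_{+}(\gamma)[\varrho]=(e^{2\gamma}-1)\,e^{-\gamma H}a^{\dagger}\varrho a e^{-\gamma H}$. The trace norm is $\|X\|_1=\operatorname{tr}\sqrt{X^{\dagger}X}$. *)

(* Defs.v *)
(* classical reals.  Operators on H = l^2(N) are represented
   by their (infinite) matrices in the Fock basis {|n>}: M m n = <m|M|n>. *)
From Stdlib Require Import Reals Lra Lia.
Open Scope R_scope.

Record C := mkC { re : R; im : R }.
Definition C0 : C := mkC 0 0.
Definition Cadd (z w : C) : C := mkC (re z + re w) (im z + im w).
Definition Cmul (z w : C) : C :=
  mkC (re z * re w - im z * im w) (re z * im w + im z * re w).
Definition Cconj (z : C) : C := mkC (re z) (- im z).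
Definition Crscale (r : R) (z : C) : C := mkC (r * re z) (r * im z).

Definition csum (f : nat -> C) (l : C) : Prop :=
  infinite_sum (fun k => re (f k)) (re l) /\
  infinite_sum (fun k => im (f k)) (im l).

Definition Mat := nat -> nat -> C.

Definition dagger (X : Mat) : Mat := fun i j => Cconj (X j i).
Definition mat_sub (X Y : Mat) : Mat :=
  fun i j => Cadd (X i j) (Crscale (-1) (Y i j)).
Definition mat_rscale (r : R) (X : Mat) : Mat := fun i j => Crscale r (X i j).

Definition mat_mul_rel (A B P : Mat) : Prop :=
  forall i j, csum (fun k => Cmul (A i k) (B k j)) (P i j).

Definition hermitian (M : Mat) : Prop := forall i j, M j i = Cconj (M i j).

Definition psd (M : Mat) : Prop :=
  forall (v : nat -> C) (N : nat),
    0 <= sum_f_R0 (fun i => sum_f_R0 (fun j =>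
            re (Cmul (Cconj (v i)) (Cmul (M i j) (v j)))) N) N.

(* tr X = t : the diagonal series converges to t (real part; for the
   self-adjoint operators it is applied to, the diagonal is real). *)
Definition trace_is (X : Mat) (t : R) : Prop :=
  infinite_sum (fun n => re (X n n)) t.

(* Density operator: positive (hermitian, psd) with trace 1 -- such a matrix
   is automatically a bounded trace-class operator. *)
Definition density (rho : Mat) : Prop :=
  hermitian rho /\ psd rho /\ trace_is rho 1.

(* tr[rho H] = t, with H = a^dag a = sum_n n |n><n|. *)
Definition trace_rhoH_is (rho : Mat) (t : R) : Prop :=
  infinite_sum (fun n => INR n * re (rho n n)) t.

(* ||X||_1 = tr sqrt(X^dag X) = t : there is a positive trace-class S
   (S = sqrt(X^dag X), unique) with S S = X^dag X and tr S = t. *)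
Definition trace_norm_is (X : Mat) (t : R) : Prop :=
  exists S P : Mat,
    hermitian S /\ psd S /\ trace_is S t /\
    mat_mul_rel (dagger X) X P /\ mat_mul_rel S S P.

(* Matrix entries, obtained by unfolding
   <m|a|k> = sqrt k [k = m+1], <m|a^dag|k> = sqrt m [k = m-1, m >= 1],
   <m|e^{-g H}|k> = e^{-g m} [k = m]. *)

(* a rho a^dag *)
Definition sub_ideal (rho : Mat) : Mat := fun m n =>
  Crscale (sqrt (INR (S m)) * sqrt (INR (S n))) (rho (S m) (S n)).

(* a^dag rho a *)
Definition add_ideal (rho : Mat) : Mat := fun m n =>
  match m, n with
  | S m', S n' => Crscale (sqrt (INR m) * sqrt (INR n)) (rho m' n')
  | _, _ => C0
  end.

(* N_-(g)[rho] = (e^{2g}-1) a e^{-gH} rho e^{-gH} a^dag *)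
Definition N_minus (g : R) (rho : Mat) : Mat := fun m n =>
  Crscale ((exp (2 * g) - 1) * sqrt (INR (S m)) * exp (- g * INR (S m))
             * exp (- g * INR (S n)) * sqrt (INR (S n)))
          (rho (S m) (S n)).

(* N_+(g)[rho] = (e^{2g}-1) e^{-gH} a^dag rho a e^{-gH} *)
Definition N_plus (g : R) (rho : Mat) : Mat := fun m n =>
  match m, n with
  | S m', S n' =>
      Crscale ((exp (2 * g) - 1) * exp (- g * INR m) * sqrt (INR m)
                 * sqrt (INR n) * exp (- g * INR n))
              (rho m' n')
  | _, _ => C0
  end.

(* Main.v *)
Require Import Defs.
From Stdlib Require Import Reals Lra Lia.
Open Scope R_scope.

Lemma C_ext (z w : Defs.C) : re z = re w -> im z = im w -> z = w.
Proof. destruct z, w; simpl; intros; subst; reflexivity. Qed.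

Lemma sum_zero (g : nat -> R) N : (forall k, (k <= N)%nat -> g k = 0) -> sum_f_R0 g N = 0.
Proof. induction N; intros H; simpl. apply H; lia. rewrite IHN by (intros; apply H; lia). rewrite H by lia. ring. Qed.

Lemma sum_one (g : nat -> R) a N : (forall k, k <> a -> g k = 0) -> (a <= N)%nat -> sum_f_R0 g N = g a.
Proof.
  intros H. induction N; intros Ha; simpl.
  - assert (a = 0)%nat by lia. subst; reflexivity.
  - destruct (Nat.eq_dec a (S N)) as [->|Hne].
    + rewrite sum_zero; [ring|]. intros k Hk; apply H; lia.
    + rewrite IHN by lia. rewrite (H (S N)) by lia. ring.
Qed.

Lemma sum_two (g : nat -> R) a b N : a <> b -> (forall k, k <> a -> k <> b -> g k = 0) ->
  (a <= N)%nat -> (b <= N)%nat -> sum_f_R0 g N = g a + g b.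
Proof.
  intros Hab H Ha Hb.
  rewrite (sum_eq g (fun k => (if Nat.eqb k a then g k else 0) + (if Nat.eqb k b then g k else 0))).
  2:{ intros k _. destruct (Nat.eqb_spec k a), (Nat.eqb_spec k b); subst; try lia; try ring. rewrite H by auto. ring. }
  rewrite plus_sum.
  rewrite (sum_one _ a); [| intros k Hk; destruct (Nat.eqb_spec k a); [contradiction|reflexivity] | exact Ha].
  rewrite (sum_one _ b); [| intros k Hk; destruct (Nat.eqb_spec k b); [contradiction|reflexivity] | exact Hb].
  rewrite !Nat.eqb_refl. reflexivity.
Qed.

Lemma isum_two' g a b l : a <> b -> (forall k, k <> a -> k <> b -> g k = 0) -> g a + g b = l ->
  infinite_sum g l.
Proof.
  intros Hab H Hl eps He. exists (Nat.max a b). intros n Hn.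
  rewrite (sum_two g a b n) by (auto; lia). rewrite Hl. unfold Rdist.
  replace (l - l) with 0 by ring. rewrite Rabs_R0. lra.
Qed.

Lemma isum_one g a : (forall k, k <> a -> g k = 0) -> infinite_sum g (g a).
Proof.
  intros H eps He. exists a. intros n Hn.
  rewrite (sum_one g a n) by (auto; lia). unfold Rdist.
  replace (g a - g a) with 0 by ring. rewrite Rabs_R0. lra.
Qed.

Lemma isum_ext f g l : (forall n, f n = g n) -> infinite_sum f l -> infinite_sum g l.
Proof.
  intros H Hf eps He. destruct (Hf eps He) as [N HN]. exists N. intros n Hn.
  rewrite <- (sum_eq f g) by auto. auto.
Qed.

Lemma csum_one (f : nat -> Defs.C) a L : (forall k, k <> a -> re (f k) = 0 /\ im (f k) = 0) ->
  re L = re (f a) /\ im L = im (f a) -> csum f L.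
Proof.
  intros H [H1 H2]. split; [rewrite H1 | rewrite H2].
  - apply (isum_one (fun k => re (f k)) a). intros k Hk; apply H; auto.
  - apply (isum_one (fun k => im (f k)) a). intros k Hk; apply H; auto.
Qed.

Definition diagR (X : Mat) (d : nat -> R) := forall i j,
  re (X i j) = (if Nat.eqb i j then d i else 0) /\ im (X i j) = 0.

Lemma diag_psd X d : diagR X d -> (forall i, 0 <= d i) -> psd X.
Proof.
  intros HX Hd v N.
  apply Rle_trans with (sum_f_R0 (fun i => d i * (re (v i) * re (v i) + im (v i) * im (v i))) N).
  { apply cond_pos_sum. intros i. apply Rmult_le_pos; [apply Hd| nra]. }
  right. apply sum_eq. intros i Hi.
  rewrite (sum_one _ i N).
  - destruct (HX i i) as [H1 H2]. rewrite Nat.eqb_refl in H1. unfold Cmul, Cconj; simpl. rewrite H1, H2. ring.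
  - intros k Hk. destruct (HX i k) as [H1 H2]. destruct (Nat.eqb_spec i k); [congruence|].
    unfold Cmul, Cconj; simpl. rewrite H1, H2. ring.
  - exact Hi.
Qed.

Lemma diag_herm X d : diagR X d -> hermitian X.
Proof.
  intros HX i j. destruct (HX i j) as [A B], (HX j i) as [A' B'].
  apply C_ext; simpl.
  - rewrite A, A', Nat.eqb_sym. destruct (Nat.eqb_spec i j); subst; reflexivity.
  - rewrite B, B'. lra.
Qed.

Lemma diag_trace X d t : diagR X d -> infinite_sum d t -> trace_is X t.
Proof.
  intros HX H. unfold trace_is. apply (isum_ext d); auto.
  intros n. destruct (HX n n) as [A _]. rewrite A, Nat.eqb_refl. reflexivity.
Qed.

Lemma diag_tnorm X d t : diagR X d -> infinite_sum (fun i => Rabs (d i)) t -> trace_norm_is X t.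
Proof.
  intros HX Ht.
  set (Sm := fun i j : nat => if Nat.eqb i j then mkC (Rabs (d i)) 0 else C0).
  assert (HS : diagR Sm (fun i => Rabs (d i))).
  { intros i j; unfold Sm; destruct (Nat.eqb i j); simpl; auto. }
  exists Sm, (fun i j => mkC (if Nat.eqb i j then d i * d i else 0) 0).
  split; [eapply diag_herm; eauto|].
  split; [eapply diag_psd; eauto; intros; apply Rabs_pos|].
  split; [eapply diag_trace; eauto|].
  split.
  - intros i j. apply (csum_one _ i).
    + intros k Hk. unfold dagger, Cmul, Cconj; simpl. destruct (HX k i) as [A B].
      destruct (Nat.eqb_spec k i); [congruence|]. rewrite A, B. split; ring.
    + unfold dagger, Cmul, Cconj; simpl. destruct (HX i i) as [A B], (HX i j) as [A' B'].
      rewrite Nat.eqb_refl in A. rewrite A, B, A', B'. destruct (Nat.eqb i j); split; ring.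
  - intros i j. apply (csum_one _ i).
    + intros k Hk. unfold Cmul; simpl. destruct (HS i k) as [A B].
      destruct (Nat.eqb_spec i k); [congruence|]. rewrite A, B. split; ring.
    + unfold Cmul; simpl. destruct (HS i i) as [A B], (HS i j) as [A' B'].
      rewrite Nat.eqb_refl in A. rewrite A, B, A', B'.
      assert (Rabs (d i) * Rabs (d i) = d i * d i) by (rewrite <- Rabs_mult; apply Rabs_right; nra).
      destruct (Nat.eqb i j); split; simpl; try ring. rewrite <- H. ring.
Qed.

Lemma diag_comb X Y dX dY a b : diagR X dX -> diagR Y dY ->
  diagR (mat_sub (mat_rscale a X) (mat_rscale b Y)) (fun i => a * dX i + -1 * (b * dY i)).
Proof.
  intros HX HY i j. unfold mat_sub, mat_rscale, Cadd, Crscale; simpl.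
  destruct (HX i j) as [A B], (HY i j) as [A' B']. rewrite A, B, A', B'.
  destruct (Nat.eqb i j); split; ring.
Qed.

Lemma diag_sub_ideal rho w : diagR rho w ->
  diagR (sub_ideal rho) (fun m => sqrt (INR (S m)) * sqrt (INR (S m)) * w (S m)).
Proof.
  intros H i j. unfold sub_ideal, Crscale. cbn [re im].
  destruct (H (S i) (S j)) as [A B]. rewrite A, B.
  change (Nat.eqb (S i) (S j)) with (Nat.eqb i j).
  destruct (Nat.eqb_spec i j); [subst|]; split; ring.
Qed.

Lemma diag_N_minus g rho w : diagR rho w ->
  diagR (N_minus g rho) (fun m => (exp (2 * g) - 1) * sqrt (INR (S m)) * exp (- g * INR (S m))
             * exp (- g * INR (S m)) * sqrt (INR (S m)) * w (S m)).
Proof.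
  intros H i j. unfold N_minus, Crscale. cbn [re im].
  destruct (H (S i) (S j)) as [A B]. rewrite A, B.
  change (Nat.eqb (S i) (S j)) with (Nat.eqb i j).
  destruct (Nat.eqb_spec i j); [subst|]; split; ring.
Qed.

Lemma diag_add_ideal rho w : diagR rho w ->
  diagR (add_ideal rho) (fun m => match m with O => 0 | S m' =>
     sqrt (INR (S m')) * sqrt (INR (S m')) * w m' end).
Proof.
  intros H i j. destruct i as [|i], j as [|j]; unfold add_ideal; cbn [re im C0 Nat.eqb];
    try (split; reflexivity).
  unfold Crscale; cbn [re im].
  destruct (H i j) as [A B]. rewrite A, B.
  destruct (Nat.eqb_spec i j); [subst|]; split; ring.
Qed.

Lemma diag_N_plus g rho w : diagR rho w ->
  diagR (N_plus g rho) (fun m => match m with O => 0 | S m' =>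
     (exp (2 * g) - 1) * exp (- g * INR (S m')) * sqrt (INR (S m'))
                 * sqrt (INR (S m')) * exp (- g * INR (S m')) * w m' end).
Proof.
  intros H i j. destruct i as [|i], j as [|j]; unfold N_plus; cbn [re im C0 Nat.eqb];
    try (split; reflexivity).
  unfold Crscale; cbn [re im].
  destruct (H i j) as [A B]. rewrite A, B.
  destruct (Nat.eqb_spec i j); [subst|]; split; ring.
Qed.

Lemma exp_bound g n1 : 0 < g -> 1 <= g * INR n1 ->
  4 * (exp (-g * INR (S n1)) * exp (-g * INR (S n1))) <= exp (-g * 1) * exp (-g * 1).
Proof.
  intros Hg Hn.
  assert (E : exp (-g * 1) = exp (-g * INR (S n1)) * exp (g * INR n1)).
  { rewrite <- exp_plus. f_equal. rewrite S_INR. ring. }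
  assert (H2 : 2 <= exp (g * INR n1)).
  { assert (H := exp_ineq1 (g * INR n1)). specialize (H ltac:(lra)). lra. }
  assert (P := exp_pos (-g * INR (S n1))).
  rewrite E. set (a := exp (-g * INR (S n1))) in *. set (b := exp (g * INR n1)) in *.
  assert (0 < a * a) by nra. assert (4 <= b * b) by nra.
  replace (a * b * (a * b)) with ((a * a) * (b * b)) by ring. nra.
Qed.

Lemma final p K u v : 0 < p -> 0 < K -> 0 < v -> 4 * v <= u ->
  ln (exp 1 - 1) / 2 <=
  Rabs (/(p+p)*p + -1*(/(K*u+K*v)*(K*u))) + Rabs (/(p+p)*p + -1*(/(K*u+K*v)*(K*v))).
Proof.
  intros Hp HK Hv Hu.
  assert (L : ln (exp 1 - 1) < 1).
  { assert (E1 : 1 < exp 1) by (assert (H := exp_ineq1 1); specialize (H ltac:(lra)); lra).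
    apply Rlt_le_trans with (ln (exp 1)); [apply ln_increasing; lra | rewrite ln_exp; lra]. }
  assert (A1 := Rle_abs (- (/(p+p)*p + -1*(/(K*u+K*v)*(K*u))))); rewrite Rabs_Ropp in A1.
  assert (A2 := Rle_abs (/(p+p)*p + -1*(/(K*u+K*v)*(K*v)))).
  assert (Hd : (/(p+p)*p + -1*(/(K*u+K*v)*(K*v))) - (/(p+p)*p + -1*(/(K*u+K*v)*(K*u)))
     = (u - v) * / (u + v)) by (field; repeat split; nra).
  assert (Hi : (u + v) * / (u + v) = 1) by (field; lra).
  assert (Hp' : 0 < / (u + v)) by (apply Rinv_0_lt_compat; lra).
  assert (1/2 <= (u - v) * / (u + v)) by nra.
  lra.
Qed.

Lemma part_minus g n0 : 0 < g -> 1 <= g * INR (S n0) ->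
  exists (rho : Mat) (tH tA tN t : R),
      density rho /\
      trace_rhoH_is rho tH /\ 0 < tH /\
      trace_is (sub_ideal rho) tA /\
      trace_is (N_minus g rho) tN /\
      trace_norm_is
        (mat_sub (mat_rscale (/ tA) (sub_ideal rho))
                 (mat_rscale (/ tN) (N_minus g rho))) t /\
      ln (exp 1 - 1) / 2 <= t.
Proof.
  intros Hg Hn.
  set (n1 := S n0) in *.
  set (x := INR (S n1)).
  assert (Hx : 0 < x) by (apply lt_0_INR; lia).
  set (q := / (x + 1)). set (p := x * q).
  assert (Hq : 0 < q) by (apply Rinv_0_lt_compat; lra).
  assert (Hp : 0 < p) by (apply Rmult_lt_0_compat; lra).
  assert (Hpq : p + q = 1) by (unfold p, q; field; lra).
  set (w := fun k => if Nat.eqb k 1 then p else if Nat.eqb k (S n1) then q else 0).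
  assert (w0 : forall k, k <> 1%nat -> k <> S n1 -> w k = 0).
  { intros k H1 H2. unfold w. destruct (Nat.eqb_spec k 1); [lia|].
    destruct (Nat.eqb_spec k (S n1)); [lia|]. reflexivity. }
  assert (w1 : w 1%nat = p) by reflexivity.
  assert (wn : w (S n1) = q).
  { unfold w. destruct (Nat.eqb_spec (S n1) 1); [unfold n1 in *; lia|]. rewrite Nat.eqb_refl. reflexivity. }
  assert (Hw : forall i, 0 <= w i).
  { intros i. unfold w. destruct (Nat.eqb i 1); [lra|]. destruct (Nat.eqb i (S n1)); lra. }
  set (rho := fun i j : nat => if Nat.eqb i j then mkC (w i) 0 else C0).
  assert (Hrho : diagR rho w).
  { intros i j. unfold rho. destruct (Nat.eqb i j); simpl; auto. }
  set (dA := fun m => sqrt (INR (S m)) * sqrt (INR (S m)) * w (S m)).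
  set (dN := fun m => (exp (2 * g) - 1) * sqrt (INR (S m)) * exp (- g * INR (S m))
             * exp (- g * INR (S m)) * sqrt (INR (S m)) * w (S m)).
  assert (HA : diagR (sub_ideal rho) dA) by (apply diag_sub_ideal; exact Hrho).
  assert (HN : diagR (N_minus g rho) dN) by (apply diag_N_minus; exact Hrho).
  set (tA := dA 0%nat + dA n1). set (tN := dN 0%nat + dN n1).
  assert (HD := diag_comb _ _ _ _ (/ tA) (/ tN) HA HN).
  set (D := fun i => / tA * dA i + -1 * (/ tN * dN i)) in HD.
  assert (Hne : (0 <> n1)%nat) by (unfold n1; lia).
  assert (zA : forall k, k <> 0%nat -> k <> n1 -> dA k = 0).
  { intros k H1 H2. unfold dA. rewrite w0 by lia. ring. }
  assert (zN : forall k, k <> 0%nat -> k <> n1 -> dN k = 0).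
  { intros k H1 H2. unfold dN. rewrite w0 by lia. ring. }
  assert (Hc : 0 < exp (2 * g) - 1).
  { assert (H := exp_ineq1 (2 * g)). specialize (H ltac:(lra)). lra. }
  set (u := exp (-g * 1) * exp (-g * 1)).
  set (v := exp (- g * x) * exp (- g * x)).
  assert (Hv : 0 < v) by (unfold v; assert (H := exp_pos (-g*x)); nra).
  assert (Huv : 4 * v <= u) by (apply exp_bound; auto).
  assert (dA0 : dA 0%nat = p) by (unfold dA; rewrite INR_1, sqrt_1, w1; ring).
  assert (Hs : sqrt x * sqrt x = x) by (apply sqrt_sqrt; lra).
  assert (dAn : dA n1 = p).
  { unfold dA. fold x. rewrite Hs, wn. unfold p. ring. }
  assert (dN0 : dN 0%nat = ((exp (2 * g) - 1) * p) * u).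
  { unfold dN, u. rewrite INR_1, sqrt_1, w1. ring. }
  assert (dNn : dN n1 = ((exp (2 * g) - 1) * p) * v).
  { unfold dN, v. fold x. rewrite wn.
    replace ((exp (2 * g) - 1) * sqrt x * exp (- g * x) * exp (- g * x) * sqrt x * q)
      with ((exp (2 * g) - 1) * (sqrt x * sqrt x) * exp (- g * x) * exp (- g * x) * q) by ring.
    rewrite Hs. unfold p. ring. }
  exists rho, (INR 1 * w 1%nat + INR (S n1) * w (S n1)), tA, tN, (Rabs (D 0%nat) + Rabs (D n1)).
  split; [split; [eapply diag_herm; eauto | split; [eapply diag_psd; eauto | ]] |].
  { eapply diag_trace; [exact Hrho|]. apply (isum_two' w 1 (S n1)).
    - unfold n1; lia.
    - exact w0.
    - rewrite w1, wn; exact Hpq. }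
  split.
  { unfold trace_rhoH_is. apply (isum_two' (fun n => INR n * re (rho n n)) 1 (S n1)).
    - unfold n1; lia.
    - intros k H1 H2. unfold rho. rewrite Nat.eqb_refl. simpl. rewrite w0 by auto. ring.
    - unfold rho. rewrite !Nat.eqb_refl. reflexivity. }
  split.
  { rewrite w1, wn, INR_1. fold x. nra. }
  split.
  { eapply diag_trace; [exact HA|]. apply (isum_two' dA 0 n1); auto. }
  split.
  { eapply diag_trace; [exact HN|]. apply (isum_two' dN 0 n1); auto. }
  split.
  { eapply diag_tnorm; [exact HD|]. apply (isum_two' (fun i => Rabs (D i)) 0 n1); auto.
    intros k H1 H2. unfold D. rewrite zA, zN by auto. replace (/ tA * 0 + -1 * (/ tN * 0)) with 0 by ring.
    apply Rabs_R0. }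
  unfold D, tA, tN. rewrite dA0, dAn, dN0, dNn.
  apply final; auto. apply Rmult_lt_0_compat; auto.
Qed.

Lemma part_plus g n0 : 0 < g -> 1 <= g * INR (S n0) ->
  exists (rho : Mat) (tH tA tN t : R),
      density rho /\
      trace_rhoH_is rho tH /\
      trace_is (add_ideal rho) tA /\
      trace_is (N_plus g rho) tN /\
      trace_norm_is
        (mat_sub (mat_rscale (/ tA) (add_ideal rho))
                 (mat_rscale (/ tN) (N_plus g rho))) t /\
      ln (exp 1 - 1) / 2 <= t.
Proof.
  intros Hg Hn.
  set (n1 := S n0) in *.
  set (x := INR (S n1)).
  assert (Hx : 0 < x) by (apply lt_0_INR; lia).
  set (q := / (x + 1)). set (p := x * q).
  assert (Hq : 0 < q) by (apply Rinv_0_lt_compat; lra).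
  assert (Hp : 0 < p) by (apply Rmult_lt_0_compat; lra).
  assert (Hpq : p + q = 1) by (unfold p, q; field; lra).
  set (w := fun k => if Nat.eqb k 0 then p else if Nat.eqb k n1 then q else 0).
  assert (w0 : forall k, k <> 0%nat -> k <> n1 -> w k = 0).
  { intros k H1 H2. unfold w. destruct (Nat.eqb_spec k 0); [lia|].
    destruct (Nat.eqb_spec k n1); [lia|]. reflexivity. }
  assert (w1 : w 0%nat = p) by reflexivity.
  assert (wn : w n1 = q).
  { unfold w. destruct (Nat.eqb_spec n1 0); [unfold n1 in *; lia|]. rewrite Nat.eqb_refl. reflexivity. }
  assert (Hw : forall i, 0 <= w i).
  { intros i. unfold w. destruct (Nat.eqb i 0); [lra|]. destruct (Nat.eqb i n1); lra. }
  set (rho := fun i j : nat => if Nat.eqb i j then mkC (w i) 0 else C0).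
  assert (Hrho : diagR rho w).
  { intros i j. unfold rho. destruct (Nat.eqb i j); simpl; auto. }
  set (dA := fun m => match m with O => 0 | S m' =>
     sqrt (INR (S m')) * sqrt (INR (S m')) * w m' end).
  set (dN := fun m => match m with O => 0 | S m' =>
     (exp (2 * g) - 1) * exp (- g * INR (S m')) * sqrt (INR (S m'))
                 * sqrt (INR (S m')) * exp (- g * INR (S m')) * w m' end).
  assert (HA : diagR (add_ideal rho) dA) by (apply diag_add_ideal; exact Hrho).
  assert (HN : diagR (N_plus g rho) dN) by (apply diag_N_plus; exact Hrho).
  set (tA := dA 1%nat + dA (S n1)). set (tN := dN 1%nat + dN (S n1)).
  assert (HD := diag_comb _ _ _ _ (/ tA) (/ tN) HA HN).
  set (D := fun i => / tA * dA i + -1 * (/ tN * dN i)) in HD.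
  assert (Hne : (1 <> S n1)%nat) by (unfold n1; lia).
  assert (zA : forall k, k <> 1%nat -> k <> S n1 -> dA k = 0).
  { intros [|k] H1 H2; unfold dA; [reflexivity|]. rewrite w0 by lia. ring. }
  assert (zN : forall k, k <> 1%nat -> k <> S n1 -> dN k = 0).
  { intros [|k] H1 H2; unfold dN; [reflexivity|]. rewrite w0 by lia. ring. }
  assert (Hc : 0 < exp (2 * g) - 1).
  { assert (H := exp_ineq1 (2 * g)). specialize (H ltac:(lra)). lra. }
  set (u := exp (-g * 1) * exp (-g * 1)).
  set (v := exp (- g * x) * exp (- g * x)).
  assert (Hv : 0 < v) by (unfold v; assert (H := exp_pos (-g*x)); nra).
  assert (Huv : 4 * v <= u) by (apply exp_bound; auto).
  assert (dA0 : dA 1%nat = p) by (unfold dA; rewrite INR_1, sqrt_1, w1; ring).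
  assert (Hs : sqrt x * sqrt x = x) by (apply sqrt_sqrt; lra).
  assert (dAn : dA (S n1) = p).
  { unfold dA. fold x. rewrite Hs, wn. unfold p. ring. }
  assert (dN0 : dN 1%nat = ((exp (2 * g) - 1) * p) * u).
  { unfold dN, u. rewrite INR_1, sqrt_1, w1. ring. }
  assert (dNn : dN (S n1) = ((exp (2 * g) - 1) * p) * v).
  { unfold dN, v. fold x. rewrite wn.
    replace ((exp (2 * g) - 1) * exp (- g * x) * sqrt x * sqrt x * exp (- g * x) * q)
      with ((exp (2 * g) - 1) * (sqrt x * sqrt x) * exp (- g * x) * exp (- g * x) * q) by ring.
    rewrite Hs. unfold p. ring. }
  exists rho, (INR 0 * w 0%nat + INR n1 * w n1), tA, tN, (Rabs (D 1%nat) + Rabs (D (S n1))).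
  split; [split; [eapply diag_herm; eauto | split; [eapply diag_psd; eauto | ]] |].
  { eapply diag_trace; [exact Hrho|]. apply (isum_two' w 0 n1).
    - unfold n1; lia.
    - exact w0.
    - rewrite w1, wn; exact Hpq. }
  split.
  { unfold trace_rhoH_is. apply (isum_two' (fun n => INR n * re (rho n n)) 0 n1).
    - unfold n1; lia.
    - intros k H1 H2. unfold rho. rewrite Nat.eqb_refl. simpl. rewrite w0 by auto. ring.
    - unfold rho. rewrite !Nat.eqb_refl. reflexivity. }
  split.
  { eapply diag_trace; [exact HA|]. apply (isum_two' dA 1 (S n1)); auto. }
  split.
  { eapply diag_trace; [exact HN|]. apply (isum_two' dN 1 (S n1)); auto. }
  split.
  { eapply diag_tnorm; [exact HD|]. apply (isum_two' (fun i => Rabs (D i)) 1 (S n1)); auto.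
    intros k H1 H2. unfold D. rewrite zA, zN by auto. replace (/ tA * 0 + -1 * (/ tN * 0)) with 0 by ring.
    apply Rabs_R0. }
  unfold D, tA, tN. rewrite dA0, dAn, dN0, dNn.
  apply final; auto. apply Rmult_lt_0_compat; auto.
Qed.

Lemma exists_n0 g : 0 < g -> exists n0, 1 <= g * INR (S n0).
Proof.
  intros Hg. destruct (archimed (/ g)) as [H1 _].
  assert (Hz : (0 < up (/ g))%Z).
  { apply lt_0_IZR. assert (0 < / g) by (apply Rinv_0_lt_compat; lra). lra. }
  exists (Z.to_nat (up (/ g))).
  rewrite S_INR, INR_IZR_INZ, Znat.Z2Nat.id by lia.
  assert (g * / g = 1) by (field; lra). nra.
Qed.

Theorem proposition1 :
  forall g : R, 0 < g ->
  (exists (rho : Mat) (tH tA tN t : R),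
      density rho /\
      trace_rhoH_is rho tH /\ 0 < tH /\
      trace_is (sub_ideal rho) tA /\
      trace_is (N_minus g rho) tN /\
      trace_norm_is
        (mat_sub (mat_rscale (/ tA) (sub_ideal rho))
                 (mat_rscale (/ tN) (N_minus g rho))) t /\
      ln (exp 1 - 1) / 2 <= t)
  /\
  (exists (rho : Mat) (tH tA tN t : R),
      density rho /\
      trace_rhoH_is rho tH /\
      trace_is (add_ideal rho) tA /\
      trace_is (N_plus g rho) tN /\
      trace_norm_is
        (mat_sub (mat_rscale (/ tA) (add_ideal rho))
                 (mat_rscale (/ tN) (N_plus g rho))) t /\
      ln (exp 1 - 1) / 2 <= t).
Proof.
  intros g Hg. destruct (exists_n0 g Hg) as [n0 Hn].
  split; [apply (part_minus g n0) | apply (part_plus g n0)]; auto.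
Qed.
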